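(* Let $\Psi$ be a universal resource. Then $E_g(\Psi)=\infty$.
   Context: For an $N$-qubit $|\psi\rangle$ and an $n$-qubit $|\phi\rangle$, $n\le N$, write $|\psi\rangle\geq_{\mathrm{LOCC}}|\phi\rangle$ if for some set $A$ of $n$ qubits the transformation $|\psi\rangle\to|\phi\rangle^A|0\rangle^{\bar A}$ is achievable exactly and with probability one by LOCC (each qubit a separate party). A resource is an infinite family $\Psi$ of multi-qubit pure states; it is universal if for every $n$ and every $n$-qubit $|\phi\rangle$ some $|\psi\rangle\in\Psi$ has $|\psi\rangle\geq_{\mathrm{LOCC}}|\phi\rangle$. The geometric measure of an $N$-qubit state is $E_g(|\psi\rangle)=-\log_2\max_{|\varphi\rangle=|\varphi_1\rangle\otimes\cdots\otimes|\varphi_N\rangle}|\langle\psi|\varphi\rangle|^2$, the maximum over normalized product states, and $E_g(\Psi):=\sup_{|\psi\rangle\in\Psi}E_g(|\psi\rangle)$. *)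

(* Defs.v *)
From HB Require Import structures.
From mathcomp Require Import all_boot all_order all_algebra.
From mathcomp Require Import complex.
From mathcomp Require Import all_classical all_reals all_analysis.

Set Implicit Arguments.
Unset Strict Implicit.
Unset Printing Implicit Defensive.

Import Order.TTheory GRing.Theory Num.Theory.
Local Open Scope ring_scope.
Local Open Scope classical_set_scope.

Section QubitDefs.
Variable R : realType.
Local Notation C := (R[i]).

(** Computational basis of N qubits: bit strings x : 'I_N -> 'I_2. *)
Notation bits N := {ffun 'I_N -> 'I_2}.

(** An (unnormalized) N-qubit pure state vector, in the computational basis. *)
Notation qstate N := {ffun bits N -> C}.

Definition sqnorm N (psi : qstate N) : C := \sum_(x : bits N) psi x * conjc (psi x).

Definition normalized N (psi : qstate N) : Prop := sqnorm psi = 1.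

Definition setbit N (x : bits N) (i : 'I_N) (b : 'I_2) : bits N :=
  [ffun j => if j == i then b else x j].

(** Apply the 2x2 operator A to qubit i:  (A on qubit i) (x) (identity elsewhere). *)
Definition apply_local N (i : 'I_N) (A : 'M[C]_2) (psi : qstate N) : qstate N :=
  [ffun x : bits N => \sum_(b : 'I_2) A (x i) b * psi (setbit x i b)].

Definition adj (A : 'M[C]_2) : 'M[C]_2 := \matrix_(i, j) conjc (A j i).

Definition complete_kraus (m : nat) (K : 'I_m -> 'M[C]_2) : Prop :=
  \sum_(k < m) (adj (K k) *m K k) = 1%:M.

(** Finite-round LOCC protocols (trees): at each node one party i performs a
    local measurement with Kraus operators K_0..K_{m-1} (outcome broadcast
    classically), and the protocol continues depending on the outcome. *)
Inductive protocol (N : nat) : Type :=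
| Stop : protocol N
| Meas : forall (i : 'I_N) (m : nat), ('I_m -> 'M[C]_2) -> ('I_m -> protocol N) -> protocol N.

(** [achieves P psi phi]: every branch of the protocol P applied to psi ends
    (exactly) in the target state phi, up to a scalar factor (which accounts
    for normalization/branch probability and global phase; zero-probability
    branches give the zero vector).  Together with completeness of every
    measurement this is exactly "psi -> phi with probability one". *)
Fixpoint achieves N (P : protocol N) (psi phi : qstate N) : Prop :=
  match P with
  | Stop => exists c : C, forall x, psi x = c * phi x
  | Meas i m K next =>
      complete_kraus K /\ forall k : 'I_m, achieves (next k) (apply_local i (K k) psi) phi
  end.

Definition LOCC_transform N (psi phi : qstate N) : Prop :=
  exists P : protocol N, achieves P psi phi.

(** |phi>^A |0>^{bar A}: the n-qubit state phi placed on the qubits f(0..n-1)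
    (A = image of the injection f), all other qubits in |0>. *)
Definition embed_state n N (f : 'I_n -> 'I_N) (phi : qstate n) : qstate N :=
  [ffun x : bits N =>
     if [forall j : 'I_N, (j \notin codom f) ==> (x j == ord0)]
     then phi [ffun k => x (f k)] else 0].

Definition locc_ge N n (psi : qstate N) (phi : qstate n) : Prop :=
  (n <= N)%N /\
  exists f : 'I_n -> 'I_N, injective f /\ LOCC_transform psi (embed_state f phi).

Definition mqstate := {N : nat & qstate N}.

Definition resource (Psi : set mqstate) : Prop :=
  infinite_set Psi /\ forall s, Psi s -> normalized (projT2 s).

Definition universal (Psi : set mqstate) : Prop :=
  forall (n : nat) (phi : qstate n), normalized phi ->
    exists2 s, Psi s & locc_ge (projT2 s) phi.

Definition product_state N (u : 'I_N -> 'I_2 -> C) : qstate N :=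
  [ffun x : bits N => \prod_(i < N) u i (x i)].

Definition normalized_qubit (v : 'I_2 -> C) : Prop :=
  \sum_(b : 'I_2) v b * conjc (v b) = 1.

Definition inner N (psi phi : qstate N) : C := \sum_(x : bits N) conjc (psi x) * phi x.

Definition product_overlaps N (psi : qstate N) : set R :=
  [set complex.Re (inner psi (product_state u) * conjc (inner psi (product_state u))) |
     u in [set u : 'I_N -> 'I_2 -> C | forall i, normalized_qubit (u i)]].

Definition log2 (x : R) : R := ln x / ln 2.

(** Geometric measure E_g(psi) = - log2 max_{product} |<psi|varphi>|^2
    (the max exists by compactness; we write it as the supremum). *)
Definition Eg N (psi : qstate N) : R := - log2 (sup (product_overlaps psi)).

Definition Eg_family (Psi : set mqstate) : \bar R :=
  ereal_sup [set (Eg (projT2 s))%:E | s in Psi].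

End QubitDefs.

(* Main.v *)
Require Import Defs.
From HB Require Import structures.
From mathcomp Require Import all_boot all_order all_algebra.
From mathcomp Require Import complex.
From mathcomp Require Import all_classical all_reals all_analysis.
From mathcomp Require Import ring lra.

Set Implicit Arguments.
Unset Strict Implicit.
Unset Printing Implicit Defensive.
Import Order.TTheory GRing.Theory Num.Theory.
Local Open Scope ring_scope.

Local Open Scope complex_scope.
Section Aux.
Variable R : realType.
Local Notation C := (R[i]).
Local Notation bits N := {ffun 'I_N -> 'I_2}.

Definition sqc (z : C) := z * conjc z.

Lemma sqc_ge0 z : 0 <= sqc z.
Proof. exact: mulcJ_ge0. Qed.

Lemma sqcM a b : sqc (a * b) = sqc a * sqc b.
Proof. by rewrite /sqc rmorphM; ring. Qed.

Lemma sqcJ a : sqc (conjc a) = sqc a.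
Proof. by rewrite /sqc conjcK mulrC. Qed.

Lemma sqc_prod I (r : seq I) (F : I -> C) :
  sqc (\prod_(i <- r) F i) = \prod_(i <- r) sqc (F i).
Proof. by rewrite /sqc rmorph_prod -big_split. Qed.

Lemma sum2 (F : 'I_2 -> C) : \sum_b F b = F ord0 + F ord_max.
Proof. by rewrite !big_ord_recl big_ord0 addr0; by congr (_ + F _); apply/val_inj. Qed.

Lemma CS2 (p q : 'I_2 -> C) :
  sqc (\sum_b p b * q b) <= (\sum_b sqc (p b)) * (\sum_b sqc (q b)).
Proof.
rewrite !sum2 -subr_ge0.
set p0 := p ord0; set p1 := p ord_max; set q0 := q ord0; set q1 := q ord_max.
have -> : (sqc p0 + sqc p1) * (sqc q0 + sqc q1) - sqc (p0 * q0 + p1 * q1)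
   = sqc (q0 * conjc p1 - q1 * conjc p0).
  rewrite /sqc !(rmorphD, rmorphM, rmorphB, rmorphN) /= ?conjcK; ring.
exact: sqc_ge0.
Qed.

Lemma kraus2 m (K : 'I_m -> 'M[C]_2) (w : 'I_2 -> C) : complete_kraus K ->
  \sum_k \sum_a sqc (\sum_b K k a b * w b) = \sum_b sqc (w b).
Proof.
move=> HK.
have H b c : \sum_k \sum_a conjc (K k a c) * K k a b = (c == b)%:R.
  have := congr1 (fun M : 'M[C]_2 => M c b) HK.
  rewrite summxE mxE => <-; apply: eq_bigr => k _.
  by rewrite mxE; apply: eq_bigr => a _; rewrite /adj mxE.
transitivity (\sum_b \sum_c (w b * conjc (w c)) *
     (\sum_k \sum_a conjc (K k a c) * K k a b)).
  rewrite /sqc.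
  under eq_bigr => k _ do under eq_bigr => a _ do
    rewrite rmorph_sum mulr_suml; 
  under eq_bigr => k _ do under eq_bigr => a _ do under eq_bigr => b _ do
    rewrite mulr_sumr.
  under eq_bigr => k _ do rewrite exchange_big.
  rewrite exchange_big; apply: eq_bigr => b _.
  under eq_bigr => k _ do rewrite exchange_big.
  rewrite exchange_big; apply: eq_bigr => c _.
  rewrite mulr_sumr; apply: eq_bigr => k _.
  rewrite mulr_sumr; apply: eq_bigr => a _.
  rewrite rmorphM; ring.
apply: eq_bigr => b _; under eq_bigr => c _ do rewrite H.
rewrite (bigD1 b) //= eqxx mulr1 big1 ?addr0 // => c /negbTE.
by rewrite eq_sym => ->; rewrite mulr0.
Qed.

End Aux.
Section Aux2.
Variable R : realType.
Local Notation C := (R[i]).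
Local Notation bits N := {ffun 'I_N -> 'I_2}.

Lemma setbitE N (x : bits N) i b j : setbit x i b j = if j == i then b else x j.
Proof. by rewrite ffunE. Qed.

Lemma setbit_at N (x : bits N) i b : setbit x i b i = b.
Proof. by rewrite setbitE eqxx. Qed.

Lemma setbitK N (x : bits N) i a b : setbit (setbit x i a) i b = setbit x i b.
Proof. by apply/ffunP => j; rewrite !setbitE; case: eqP. Qed.

Lemma setbit_id N (x : bits N) i : setbit x i (x i) = x.
Proof. by apply/ffunP => j; rewrite setbitE; case: eqP => // ->. Qed.

Lemma setbit_ne N (x : bits N) i b j : j != i -> setbit x i b j = x j.
Proof. by rewrite setbitE => /negbTE ->. Qed.

Lemma fiber N (i : 'I_N) a b (G : bits N -> C) :
  \sum_(x : bits N | x i == a) G (setbit x i b) = \sum_(x : bits N | x i == b) G x.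
Proof.
symmetry; rewrite (reindex_onto (fun x => setbit x i b) (fun y => setbit y i a)).
  apply: eq_bigl => x; rewrite setbit_at eqxx /= setbitK.
  apply/eqP/eqP => [<-|<-]; first by rewrite setbit_at.
  by rewrite setbit_id.
by move=> y /eqP <-; rewrite setbitK setbit_id.
Qed.

Lemma decomp N (i : 'I_N) (F : bits N -> C) :
  \sum_x F x = \sum_(x : bits N | x i == ord0) \sum_b F (setbit x i b).
Proof.
rewrite (exchange_big_dep xpredT) //=.
rewrite [LHS](partition_big (fun x : bits N => x i) xpredT) //=.
apply: eq_bigr => b _; rewrite -(fiber i ord0); apply: eq_bigl => x; by rewrite andbT.
Qed.

End Aux2.
Section Mono.
Variable R : realType.
Local Notation C := (R[i]).
Local Notation bits N := {ffun 'I_N -> 'I_2}.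

Definition nq N (u : 'I_N -> 'I_2 -> C) := forall i, normalized_qubit (u i).
Definition bnd N (t : {ffun bits N -> C}) (B : C) :=
  forall u, nq u -> sqc (inner t (product_state u)) <= sqnorm t * B.

Lemma sqnorm_ge0 N (v : {ffun bits N -> C}) : 0 <= sqnorm v.
Proof. by apply: sumr_ge0 => x _; exact: sqc_ge0. Qed.

Lemma realC (s : C) : 0 <= s -> s = (complex.Re s)%:C.
Proof. by move/ger0_Im; case: s => a b /= ->. Qed.

Lemma mono N (t : {ffun bits N -> C}) (B : C) : 0 <= B -> bnd t B ->
  forall P v, achieves P v t -> bnd v B.
Proof.
move=> B0 Ht P; elim: P => [|i m K next IH] v /=.
  case=> c Hc u Hu.
  have -> : inner v (product_state u) = conjc c * inner t (product_state u).
    rewrite /inner mulr_sumr; apply: eq_bigr => x _; rewrite Hc rmorphM /=; ring.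
  have -> : sqnorm v = sqc c * sqnorm t.
    rewrite /sqnorm /sqc mulr_sumr; apply: eq_bigr => x _; rewrite Hc rmorphM /=; ring.
  rewrite sqcM sqcJ -mulrA; apply: ler_wpM2l; [exact: sqc_ge0| exact: Ht].
case=> HK Hn u Hu.
pose Pp (u : 'I_N -> 'I_2 -> C) (x : bits N) := \prod_(j | j != i) u j (x j).
have UE u0 x : product_state u0 x = u0 i (x i) * Pp u0 x.
  by rewrite ffunE (bigD1 i).
have Pinv u0 x b : Pp u0 (setbit x i b) = Pp u0 x.
  by apply: eq_bigr => j /setbit_ne ->.
pose w b := \sum_(y : bits N | y i == ord0) conjc (v (setbit y i b)) * Pp u y.
have Hin : inner v (product_state u) = \sum_b u i b * w b.
  rewrite /inner (decomp i).
  under eq_bigr => y _ do under eq_bigr => b _ do rewrite UE setbit_at Pinv.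
  rewrite exchange_big; apply: eq_bigr => b _; rewrite mulr_sumr.
  by apply: eq_bigr => y _; ring.
have AL k y a : (apply_local i (K k) v) (setbit y i a)
    = \sum_b K k a b * v (setbit y i b).
  by rewrite ffunE setbit_at; apply: eq_bigr => b _; rewrite setbitK.
pose z k a := \sum_b conjc (K k a b) * w b.
have HKv k (q : 'I_2 -> C) :
  inner (apply_local i (K k) v)
    (product_state (fun j => if j == i then q else u j)) = \sum_a q a * z k a.
  rewrite /inner (decomp i).
  under eq_bigr => y _ do under eq_bigr => a _ do
    rewrite UE setbit_at Pinv eqxx AL rmorph_sum mulr_suml.
  have PE y : Pp (fun j => if j == i then q else u j) y = Pp u y.
    by apply: eq_bigr => j /negbTE ->.
  under eq_bigr => y _ do under eq_bigr => a _ do under eq_bigr => b _ do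
    rewrite PE.
  rewrite exchange_big; apply: eq_bigr => a _.
  rewrite exchange_big /z mulr_sumr; apply: eq_bigr => b _.
  rewrite /w !mulr_sumr; apply: eq_bigr => y _.
  by rewrite rmorphM /=; ring.
have HnK k : sqnorm (apply_local i (K k) v)
   = \sum_(y : bits N | y i == ord0) \sum_a sqc (\sum_b K k a b * v (setbit y i b)).
  by rewrite /sqnorm (decomp i); apply: eq_bigr => y _; apply: eq_bigr => a _;
     rewrite AL.
have Hnv : sqnorm v = \sum_k sqnorm (apply_local i (K k) v).
  under eq_bigr => k _ do rewrite HnK.
  rewrite exchange_big /sqnorm (decomp i); apply: eq_bigr => y _.
  by rewrite kraus2.
have Hk k : \sum_a sqc (z k a) <= sqnorm (apply_local i (K k) v) * B.
  set s := \sum_a sqc (z k a).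
  have s0 : 0 <= s by apply: sumr_ge0 => a _; exact: sqc_ge0.
  case: (eqVneq s 0) => [->|snz]; first by rewrite mulr_ge0 // sqnorm_ge0.
  have Hs := realC s0.
  have Res0 : 0 < complex.Re s.
    have : 0 < s by rewrite lt_def snz.
    by rewrite Hs ltcR.
  set r := Num.sqrt (complex.Re s).
  have r0 : 0 < r by rewrite sqrtr_gt0.
  set ri := (r^-1)%:C.
  have rr : ri * ri * s = 1.
    rewrite Hs /ri -!rmorphM /=.
    have -> : r^-1 * r^-1 * complex.Re s = 1.
      rewrite -(sqr_sqrtr (ltW Res0)) -/r; field; exact: lt0r_neq0.
    by [].
  have rJ : conjc ri = ri by rewrite /ri conjc_real.
  have sJ : conjc s = s by rewrite Hs conjc_real.
  clearbody ri.
  pose q a := conjc (z k a) * ri.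
  have Hq : normalized_qubit q.
    rewrite /normalized_qubit.
    transitivity (ri * ri * s); last exact: rr.
    rewrite /s mulr_sumr; apply: eq_bigr => a _.
    by rewrite /q rmorphM /= conjcK rJ /sqc; ring.
  have Hu' : nq (fun j => if j == i then q else u j).
    by move=> j; case: (j == i).
  have := IH k _ (Hn k) _ Hu'.
  rewrite HKv.
  have -> : \sum_a q a * z k a = s * ri.
    rewrite /s mulr_suml; apply: eq_bigr => a _; rewrite /q /sqc; ring.
  suff -> : sqc (s * ri) = s by [].
  by rewrite /sqc rmorphM /= sJ rJ -[RHS]mul1r -rr; ring.
rewrite Hin.
apply: (le_trans (CS2 _ _)).
rewrite (Hu i) mul1r.
have -> : \sum_b sqc (w b) = \sum_k \sum_a sqc (z k a).
  under eq_bigr => b _ do rewrite -sqcJ.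
  rewrite -(kraus2 _ HK); apply: eq_bigr => k _; apply: eq_bigr => a _.
  rewrite -sqcJ /z rmorph_sum; congr sqc; apply: eq_bigr => b _.
  by rewrite rmorphM /= conjcK.
rewrite Hnv mulr_suml; exact: ler_sum.
Qed.

End Mono.
Section Embed.
Variable R : realType.
Local Notation C := (R[i]).
Local Notation bits N := {ffun 'I_N -> 'I_2}.

Lemma sum_reindex (I J : finType) (h : J -> I) (h' : I -> J) (P : pred I)
  (F : I -> C) :
  (forall x, P x -> h (h' x) = x) -> (forall y, P (h y)) ->
  (forall y, h' (h y) = y) ->
  \sum_x (if P x then F x else 0) = \sum_y F (h y).
Proof.
move=> H1 H2 H3; rewrite -big_mkcond (reindex_onto h h' H1).
by apply: eq_bigl => y; rewrite H2 H3 eqxx.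
Qed.

Lemma sqc_le1 (v : 'I_2 -> C) b : normalized_qubit v -> sqc (v b) <= 1.
Proof.
rewrite /normalized_qubit sum2 => H.
have H0 := sqc_ge0 (v ord0); have H1 := sqc_ge0 (v ord_max).
rewrite -H; case: (unliftP ord0 b) => [j ->|->].
  have -> : lift ord0 j = ord_max by apply/val_inj; case: j => [[|[]]].
  by rewrite /sqc lerDr.
by rewrite /sqc lerDl.
Qed.

Lemma embed_bnd n N (d : 'I_n) (f : 'I_n -> 'I_N) (phi : {ffun bits n -> C}) B :
  injective f -> bnd phi B -> 0 <= B ->
  sqnorm (embed_state f phi) = sqnorm phi /\ bnd (embed_state f phi) B.
Proof.
move=> finj Hphi B0.
pose g j := odflt d [pick k | f k == j].
have gf k : g (f k) = k.
  rewrite /g; case: pickP => [k' /eqP /finj -> //|/(_ k)]; by rewrite eqxx.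
have fg j : j \in codom f -> f (g j) = j by case/codomP => k ->; rewrite gf.
pose ext (y : bits n) : bits N := [ffun j => if j \in codom f then y (g j) else ord0].
pose restr (x : bits N) : bits n := [ffun k => x (f k)].
pose Pz (x : bits N) := [forall j, (j \notin codom f) ==> (x j == ord0)].
have H1 x : Pz x -> ext (restr x) = x.
  move/forallP => Hx; apply/ffunP => j; rewrite !ffunE.
  case: ifP => jc; first by rewrite fg.
  by have := Hx j; rewrite jc /= => /eqP.
have H2 y : Pz (ext y).
  by apply/forallP => j; apply/implyP => jc; rewrite ffunE (negbTE jc).
have H3 y : restr (ext y) = y.
  by apply/ffunP => k; rewrite !ffunE codom_f gf.
have eE x : embed_state f phi x = if Pz x then phi (restr x) else 0.
  by rewrite ffunE.
have Hn : sqnorm (embed_state f phi) = sqnorm phi.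
  rewrite /sqnorm.
  transitivity (\sum_x (if Pz x then phi (restr x) * conjc (phi (restr x)) else 0)).
    by apply: eq_bigr => x _; rewrite eE; case: ifP; rewrite ?mul0r.
  by rewrite (sum_reindex _ H1 H2 H3); apply: eq_bigr => y _; rewrite H3.
split => // u Hu; rewrite Hn.
set cst := \prod_(j | j \notin codom f) u j ord0.
have -> : inner (embed_state f phi) (product_state u)
   = inner phi (product_state (fun k => u (f k))) * cst.
  rewrite /inner.
  transitivity (\sum_x (if Pz x then conjc (phi (restr x)) * product_state u x else 0)).
    by apply: eq_bigr => x _; rewrite eE; case: ifP; rewrite ?rmorph0 ?mul0r.
  rewrite (sum_reindex _ H1 H2 H3) mulr_suml; apply: eq_bigr => y _.
  rewrite H3 -mulrA; congr (_ * _); rewrite !ffunE.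
  rewrite (bigID (fun j => j \in codom f)) /=; congr (_ * _).
    rewrite (reindex_onto f g) /=; last by move=> j /fg.
    apply: eq_big => [k|k _]; first by rewrite codom_f gf eqxx.
    by rewrite ffunE codom_f gf.
  by apply: eq_bigr => j /negbTE jc; rewrite ffunE jc.
rewrite sqcM.
apply: (le_trans _ (Hphi _ (fun k => Hu (f k)))).
rewrite -[X in _ <= X]mulr1; apply: ler_wpM2l; first exact: sqc_ge0.
rewrite /cst /sqc rmorph_prod -big_split /=.
apply: prodr_ile1 => j _; rewrite sqc_ge0 /=; exact: sqc_le1.
Qed.

End Embed.
Section Diag.
Variable R : realType.
Local Notation C := (R[i]).
Local Notation bits N := {ffun 'I_N -> 'I_2}.

Definition diagb k (x : bits (k + k)) :=
  [forall i : 'I_k, x (lshift k i) == x (rshift k i)].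
Definition cstk k : C := ((Num.sqrt (2^-1 : R)) ^+ k)%:C.
Definition phiK k : {ffun bits (k + k) -> C} :=
  [ffun x => if diagb x then cstk k else 0].
Definition Bk k : C := (((2^-1 : R)) ^+ k)%:C.

Lemma sqc_cst k : sqc (cstk k) = Bk k.
Proof.
rewrite /sqc /cstk conjc_real -rmorphM /= -exprMn -expr2 sqr_sqrtr // invr_ge0 ler0n.
Qed.

Lemma Bk_ge0 k : 0 <= Bk k.
Proof. by rewrite /Bk ler0c exprn_ge0 // invr_ge0 ler0n. Qed.

Section K.
Variable k : nat.
Let dup (y : bits k) : bits (k + k) :=
  [ffun j => y (match fintype.split j with inl i => i | inr i => i end)].
Let lhalf (x : bits (k + k)) : bits k := [ffun i => x (lshift k i)].

Let dupL y i : dup y (lshift k i) = y i.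
Proof. by rewrite ffunE (unsplitK (inl i)). Qed.
Let dupR y i : dup y (rshift k i) = y i.
Proof. by rewrite ffunE (unsplitK (inr i)). Qed.

Let H1 x : diagb x -> dup (lhalf x) = x.
Proof.
move/forallP => Hx; apply/ffunP => j; rewrite -(splitK j).
case: (fintype.split j) => i /=.
  by rewrite dupL ffunE.
by rewrite dupR ffunE (eqP (Hx i)).
Qed.
Let H2 y : diagb (dup y).
Proof. by apply/forallP => i; rewrite dupL dupR. Qed.
Let H3 y : lhalf (dup y) = y.
Proof. by apply/ffunP => i; rewrite ffunE dupL. Qed.

Lemma phiK_norm : normalized (phiK k).
Proof.
rewrite /normalized /sqnorm.
transitivity (\sum_(x : bits (k + k)) (if diagb x then sqc (cstk k) else 0)).
  by apply: eq_bigr => x _; rewrite ffunE; case: ifP; rewrite ?mul0r.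
rewrite (sum_reindex _ H1 H2 H3) sumr_const card_ffun !card_ord sqc_cst /Bk.
rewrite -rmorphMn /= -mulr_natr natrX -exprMn mulVf ?expr1n // pnatr_eq0.
Qed.

Lemma phiK_bnd : bnd (phiK k) (Bk k).
Proof.
move=> u Hu; rewrite phiK_norm mul1r.
have -> : inner (phiK k) (product_state u)
   = conjc (cstk k) * \prod_i \sum_b (u (lshift k i) b * u (rshift k i) b).
  rewrite /inner.
  transitivity (\sum_(x : bits (k + k)) (if diagb x then conjc (cstk k) * product_state u x else 0)).
    by apply: eq_bigr => x _; rewrite ffunE; case: ifP; rewrite ?rmorph0 ?mul0r.
  rewrite (sum_reindex _ H1 H2 H3) -mulr_sumr; congr (_ * _).
  rewrite bigA_distr_bigA; apply: eq_bigr => y _.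
  rewrite ffunE big_split_ord /= big_split /=.
  by congr (_ * _); apply: eq_bigr => i _; rewrite ?dupL ?dupR.
rewrite sqcM sqcJ sqc_cst -[X in _ <= X]mulr1; apply: ler_wpM2l; first exact: Bk_ge0.
rewrite /sqc rmorph_prod -big_split /=.
apply: prodr_ile1 => i _; rewrite sqc_ge0 /=.
apply: (le_trans (CS2 _ _)).
by rewrite (Hu (lshift k i)) (Hu (rshift k i)) mul1r.
Qed.

End K.
End Diag.
Section Final.
Variable R : realType.
Local Notation C := (R[i]).
Local Notation bits N := {ffun 'I_N -> 'I_2}.

Lemma Eg_ge N (psi : {ffun bits N -> C}) k :
  normalized psi -> bnd psi (Bk R k) -> k%:R <= Eg psi.
Proof.
move=> Hn Hb.
set S := product_overlaps psi.
have ub : ubound S ((2^-1 : R) ^+ k).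
  move=> e [u Hu <-].
  have := Hb u Hu; rewrite Hn mul1r lecE => /andP[_].
  by rewrite /Bk /=.
have [x Hx] : exists x, psi x != 0.
  case: (pickP (fun x => psi x != 0)) => [x Hx|H0]; first by exists x.
  move: Hn; rewrite /normalized /sqnorm big1 => [/esym/eqP|y _].
    by rewrite oner_eq0.
  by have /negbFE/eqP -> := H0 y; rewrite mul0r.
pose u0 (j : 'I_N) (b : 'I_2) : C := if b == x j then 1 else 0.
have Hu0 : nq u0.
  move=> j; rewrite /normalized_qubit (bigD1 (x j)) //= big1 => [|b /negbTE Hb'].
    by rewrite /u0 eqxx conjc1 mulr1 addr0.
  by rewrite /u0 Hb' mul0r.
have Hin : inner psi (product_state u0) = conjc (psi x).
  rewrite /inner (bigD1 x) //= big1 => [|y Hy].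
    rewrite ffunE big1 ?mulr1 ?addr0 // => j _; by rewrite /u0 eqxx.
  have /existsP [j Hj] : [exists j, y j != x j].
    apply: contraNT Hy => /existsPn H; apply/eqP/ffunP => j.
    by have := H j; rewrite negbK => /eqP.
  by rewrite ffunE (bigD1 j) //= /u0 (negbTE Hj) mul0r mulr0.
set e0 := complex.Re (sqc (inner psi (product_state u0))).
have Se0 : S e0 by exists u0.
have e0pos : 0 < e0.
  have : 0 < sqc (inner psi (product_state u0)).
    rewrite lt_def sqc_ge0 andbT Hin /sqc mulf_neq0 //.
      by rewrite conjc_eq0.
    by rewrite conjcK.
  by rewrite ltcE => /andP[_].
have hs : has_sup S by split; [exists e0 | exists ((2^-1 : R) ^+ k)].
have sup_ge : e0 <= sup S by apply: sup_upper_bound.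
have sup_le : sup S <= (2^-1 : R) ^+ k by apply: ge_sup => //; exists e0.
have sup_pos : 0 < sup S by apply: lt_le_trans sup_ge.
have L0 : 0 < ln (2 : R) by apply: ln_gt0; rewrite ltr1n.
have Hln : ln (sup S) <= - (k%:R * ln (2 : R)).
  have h2 : (0 : R) < 2^-1 by rewrite invr_gt0 ltr0n.
  apply: (le_trans (_ : _ <= ln ((2^-1 : R) ^+ k))).
    by rewrite ler_ln // posrE // exprn_gt0.
  rewrite lnXn // lnV ?posrE ?ltr0n // mulNrn.
  by rewrite mulr_natl.
rewrite /Eg /log2 -mulNr ler_pdivlMr //.
lra.
Qed.

End Final.

Theorem theorem7 (R : realType) (Psi : set (mqstate R)) :
  resource Psi -> universal Psi -> Eg_family Psi = +oo%E.
Proof.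
move=> [_ Hnorm] Huniv.
have key : forall K : nat, exists2 s, Psi s & (K.+1%:R <= Eg (projT2 s)).
  move=> K.
  have [s Ps [_ [f [finj [P HP]]]]] := Huniv _ (phiK R K.+1) (phiK_norm R K.+1).
  have d : 'I_(K.+1 + K.+1) by exists 0%N; rewrite addSn.
  have [_ Hb] := embed_bnd d finj (@phiK_bnd R K.+1) (Bk_ge0 R K.+1).
  exists s => //; apply: Eg_ge; first exact: Hnorm.
  exact: (mono (Bk_ge0 R K.+1) Hb HP).
pose A := [set Eg (projT2 s) | s in Psi]%classic.
have -> : Eg_family Psi = ereal_sup [set x%:E | x in A]%classic by rewrite image_comp.
apply: hasNub_ereal_sup.
  move=> [M HM].
  have [s Ps Hs] := key (Num.Def.trunc M).
  have := HM _ (ex_intro2 _ _ s Ps erefl).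
  have := truncnS_gt M.
  move=> h1 h2; have := le_lt_trans h2 h1; by rewrite ltNge Hs.
have [s Ps _] := key 0%N.
by exists (Eg (projT2 s)), s.
Qed.
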